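(* If $\mathcal M'$ is a simple acyclic oriented matroid on a finite set $E$, then there is a total order $<$ of $E$ such that there is a strong map $\mathcal M'\longrightarrow\mathcal M(<)$.
   Context: For a finite set $E$ totally ordered by $<$, $\mathcal M(<)$ is the uniform rank 2 oriented matroid on $E$ whose signed circuits are $(\{e_1,e_3\},\{e_2\})$ and $(\{e_2\},\{e_1,e_3\})$ for $e_1<e_2<e_3$, and whose signed cocircuits are $(\{e':e'<e\},\{e'':e''>e\})$ and its opposite, for $e\in E$. For two oriented matroids $\mathcal M_1,\mathcal M_2$ on the same ground set, a strong map $\mathcal M_1\longrightarrow\mathcal M_2$ exists if every cocircuit of $\mathcal M_2$ is a covector of $\mathcal M_1$ (equivalently, every circuit of $\mathcal M_1$ is a vector of $\mathcal M_2$). *)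

(* Defs.v *)
From mathcomp Require Import all_boot.
Set Implicit Arguments. Unset Strict Implicit. Unset Printing Implicit Defensive.

Inductive sgn := SZero | SPos | SNeg.

Definition sopp (s : sgn) : sgn :=
  match s with SZero => SZero | SPos => SNeg | SNeg => SPos end.

Section OM.
Variable E : finType.

Definition svec := E -> sgn.
Definition vopp (X : svec) : svec := fun e => sopp (X e).
Definition supp (X : svec) (e : E) : Prop := X e <> SZero.
Definition is_zero (X : svec) : Prop := forall e, X e = SZero.
Definition veq (X Y : svec) : Prop := forall e, X e = Y e.

(* signed circuit axioms (C0)-(C3) of Bjorner et al., "Oriented Matroids" 3.2.1 *)
Definition is_OM_circuits (C : svec -> Prop) : Prop :=
  [/\ (forall X, C X -> ~ is_zero X),
      (forall X, C X -> C (vopp X)),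
      (forall X Y, C X -> C Y -> (forall e, supp X e -> supp Y e) ->
          veq X Y \/ veq X (vopp Y)) &
      (forall X Y e, C X -> C Y -> ~ veq X (vopp Y) ->
          X e = SPos -> Y e = SNeg ->
          exists Z, [/\ C Z, Z e = SZero &
            forall f, (Z f = SPos -> X f = SPos \/ Y f = SPos) /\
                      (Z f = SNeg -> X f = SNeg \/ Y f = SNeg)])].

(* simple: no loops (circuits of size 1) and no parallel pairs (size 2) *)
Definition OM_simple (C : svec -> Prop) : Prop :=
  forall X, C X -> ~ (exists e, forall f, supp X f -> f = e) /\
                   ~ (exists e1 e2, forall f, supp X f -> f = e1 \/ f = e2).

(* acyclic: no positive circuit *)
Definition OM_acyclic (C : svec -> Prop) : Prop :=
  forall X, C X -> exists e, X e = SNeg.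

Definition orth (X Y : svec) : Prop :=
  (forall e, X e = SZero \/ Y e = SZero) \/
  ((exists e, (X e = SPos /\ Y e = SPos) \/ (X e = SNeg /\ Y e = SNeg)) /\
   (exists f, (X f = SPos /\ Y f = SNeg) \/ (X f = SNeg /\ Y f = SPos))).

Definition OM_covector (C : svec -> Prop) (Y : svec) : Prop :=
  forall X, C X -> orth X Y.

Definition strict_total_order (lt : rel E) : Prop :=
  [/\ (forall x, ~~ lt x x),
      (forall x y z, lt x y -> lt y z -> lt x z) &
      (forall x y, x != y -> lt x y || lt y x)].

Definition Mlt_cocircuit (lt : rel E) (Y : svec) : Prop :=
  exists e, veq Y (fun f => if lt f e then SPos else if lt e f then SNeg else SZero)
         \/ veq Y (fun f => if lt f e then SNeg else if lt e f then SPos else SZero).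

Definition strong_map (C1 : svec -> Prop) (cocirc2 : svec -> Prop) : Prop :=
  forall Y, cocirc2 Y -> OM_covector C1 Y.

End OM.

(* Main.v *)
Require Import Defs.
From mathcomp Require Import all_boot.
From Stdlib Require Import Classical.
Set Implicit Arguments. Unset Strict Implicit. Unset Printing Implicit Defensive.

Definition isneg (s : sgn) : bool := if s is SNeg then true else false.
Definition conf (E : finType) (X S : svec E) := forall f, X f <> SZero -> X f = S f.
Definition topeK (E : finType) (C : svec E -> Prop) (K : {set E}) (S : svec E) :=
  forall X, C X -> (forall f, X f <> SZero -> f \in K) -> ~ conf X S.
Definition upd (E : finType) (S : svec E) (e : E) (v : sgn) : svec E :=
  fun f => if f == e then v else S f.

Lemma flip (E : finType) (C : svec E -> Prop) :
  is_OM_circuits C -> OM_simple C -> OM_acyclic C ->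
  forall n (K : {set E}) (S : svec E), (forall f, S f <> SZero) ->
  #|[set x in K | isneg (S x)]| = n.+1 -> topeK C K S ->
  exists e, [/\ e \in K, S e = SNeg & topeK C K (upd S e SPos)].
Proof.
move=> [C0 C1 C2 C3] Hs Ha; elim=> [|n IH] K S Sfull Hcard HT.
- have [g Hg] : exists g, [set x in K | isneg (S x)] = [set g] by apply/cards1P; rewrite Hcard.
  have gin : g \in [set x in K | isneg (S x)] by rewrite Hg set11.
  rewrite inE in gin; case/andP: gin => gK gneg.
  exists g; split => //; first by move: gneg; case: (S g).
  move=> X CX XK Xc.
  have [h Xh] := Ha X CX.
  have Xh' := Xc h (ltac:(by rewrite Xh)).
  rewrite /upd in Xh'. move: Xh'; case: eqP => [hg|hg]; first by subst h; rewrite Xh.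
  move=> Sh.
  have : h \in [set x in K | isneg (S x)].
    by rewrite inE XK ?Xh // -Sh Xh.
  by rewrite Hg inE => /eqP.
- have : 0 < #|[set x in K | isneg (S x)]| by rewrite Hcard.
  case/card_gt0P => g; rewrite inE => /andP [gK gneg].
  have Sg : S g = SNeg by move: gneg; case: (S g).
  have Hcard' : #|[set x in K :\ g | isneg (S x)]| = n.+1.
    have -> : [set x in K :\ g | isneg (S x)] = [set x in K | isneg (S x)] :\ g.
      by apply/setP => x; rewrite !inE; case: (x != g).
    by move: Hcard; rewrite (cardsD1 g) inE gK gneg add1n => -[].
  have HT' : topeK C (K :\ g) S.
    move=> X CX XK; apply: HT CX _ => f Xf; have := XK f Xf; rewrite inE => /andP[].
    done.
  have [e [eK' Se HTe]] := IH _ _ Sfull Hcard' HT'.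
  move: eK'; rewrite in_setD1 => /andP [eg eK].
  case: (classic (topeK C K (upd S g SPos))) => Hg; first by exists g.
  have [Y [CY [YK Yc]]] : exists Y, C Y /\ (forall f, Y f <> SZero -> f \in K)
       /\ conf Y (upd S g SPos).
    apply: NNPP => H; apply: Hg => Y CY YK Yc; apply: H; by exists Y.
  exists e; split => // X CX XK Xc.
  case XgE: (X g) => [||].
  + apply: (HTe X CX) => // f Xf; rewrite in_setD1 XK // andbT.
    by apply/eqP => fg; subst f; rewrite XgE in Xf.
  + have H := Xc g; rewrite XgE /upd eq_sym (negbTE eg) in H.
    by have := H ltac:(done); rewrite Sg.
  + have YgE : Y g = SPos.
      case YgE: (Y g) => [||] //.
      * exfalso; apply: (HT Y CY YK) => f Yf; rewrite (Yc f Yf) /upd.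
        case: eqP => // fg; subst f; by rewrite YgE in Yf.
      * have := Yc g; rewrite YgE /upd eqxx => H; by have := H ltac:(done).
    have nV : ~ veq Y (vopp X).
      move=> V; apply: (proj2 (Hs Y CY)); exists e, g => f Yf.
      case: (eqVneq f e) => [->|fe]; first by left.
      case: (eqVneq f g) => [->|fg]; first by right.
      exfalso.
      have YS : Y f = S f by rewrite (Yc f Yf) /upd (negbTE fg).
      have Xf : X f <> SZero by move=> Xf0; apply: Yf; rewrite V /vopp Xf0.
      have XS : X f = S f by rewrite (Xc f Xf) /upd (negbTE fe).
      have := V f; rewrite /vopp YS XS; have := Sfull f; by case: (S f).
    have [Z [CZ Zg Zf]] := C3 Y X g CY CX nV YgE XgE.
    have Zs : forall f, Z f <> SZero -> Z f = Y f \/ Z f = X f.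
      move=> f; have [Zp Zn] := Zf f; case ZfE: (Z f) => [||] // _.
      * by case: (Zp ZfE) => ->; [left|right].
      * by case: (Zn ZfE) => ->; [left|right].
    have ZK : forall f, Z f <> SZero -> f \in K.
      move=> f Zf0; case: (Zs f Zf0) => H.
      * by apply: YK; rewrite -H.
      * by apply: XK; rewrite -H.
    have ZS : forall f, f != e -> Z f <> SZero -> Z f = S f.
      move=> f fe Zf0.
      have fg : f != g by apply/eqP => fg; subst f.
      case: (Zs f Zf0) => H; rewrite H.
      * have Yf0 : Y f <> SZero by rewrite -H.
        by rewrite (Yc f Yf0) /upd (negbTE fg).
      * have Xf0 : X f <> SZero by rewrite -H.
        by rewrite (Xc f Xf0) /upd (negbTE fe).
    have HZK' : forall f, Z f <> SZero -> f \in K :\ g.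
      move=> f Zf0; rewrite in_setD1 ZK // andbT; apply/eqP => fg; subst f; by rewrite Zg in Zf0.
    case ZeE: (Z e) => [||].
    * apply: (HT Z CZ ZK) => f Zf0; case: (eqVneq f e) => [fe|fe]; last exact: ZS.
      by subst f; rewrite ZeE in Zf0.
    * apply: (HTe Z CZ HZK') => f Zf0; rewrite /upd; case: (eqVneq f e) => [fe|fe].
        by subst f; rewrite ZeE.
      exact: ZS.
    * apply: (HT Z CZ ZK) => f Zf0; case: (eqVneq f e) => [fe|fe]; last exact: ZS.
      by subst f; rewrite ZeE Se.
Qed.


Definition SI (E : finType) (I : {set E}) (p : seq E) : svec E :=
  fun f => if (f \in I) || (f \in p) then SPos else SNeg.

Lemma tope_ext (E : finType) (C : svec E -> Prop) K (S S' : svec E) :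
  (forall f, S f = S' f) -> topeK C K S -> topeK C K S'.
Proof. move=> H HT X CX XK Xc; apply: (HT X CX XK) => f Xf; by rewrite Xc // H. Qed.

Lemma seqB (E : finType) (C : svec E -> Prop) :
  is_OM_circuits C -> OM_simple C -> OM_acyclic C ->
  forall n (I : {set E}), #|~: I| = n -> topeK C setT (SI I [::]) ->
  exists s : seq E, [/\ uniq s, forall x, (x \in s) = (x \notin I) &
     forall k, topeK C setT (SI I (take k s))].
Proof.
move=> HC Hs Ha; elim=> [|n IH] I Hc HT.
- exists [::]; split => // x.
  apply/esym/negbTE; rewrite -in_setC; apply/negP => xin.
  by have := card0_eq Hc x; rewrite xin.
- have Hc' : #|[set x in setT | isneg (SI I [::] x)]| = n.+1.
    rewrite -Hc; apply: eq_card => x; rewrite !inE /SI orbF; by case: (x \in I).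
  have Sfull : forall f, SI I [::] f <> SZero by move=> f; rewrite /SI; case: (_ || _).
  have [e [_ Se HTe]] := flip HC Hs Ha Sfull Hc' HT.
  have eI : e \notin I by move: Se; rewrite /SI orbF; case: (e \in I).
  have Hc2 : #|~: (e |: I)| = n.
    have -> : ~: (e |: I) = (~: I) :\ e.
      by apply/setP => x; rewrite !inE; case: (x == e).
    by move: Hc; rewrite (cardsD1 e) inE eI add1n => -[].
  have HT2 : topeK C setT (SI (e |: I) [::]).
    apply: tope_ext HTe => f; rewrite /upd /SI !inE orbF; case: (f == e) => //=; by rewrite orbF.
  have [s [us ms ts]] := IH _ Hc2 HT2.
  exists (e :: s); split.
  + by rewrite /= us ms !inE eqxx.
  + move=> x; rewrite inE ms !inE negb_or; case: (eqVneq x e) => [->|] //=. all: try (rewrite ?eqxx (negbTE eI) //).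

  + case=> [|k] //=; apply: tope_ext (ts k) => f.
    by rewrite /SI !inE; case: (f == e); rewrite ?orbT.
Qed.

Lemma orth_ext (E : finType) (X Y Y' : svec E) : veq Y Y' -> orth X Y -> orth X Y'.
Proof.
move=> V [H|[[e He] [f Hf]]]; [left => g; rewrite -V; exact: H|right; split].
- by exists e; rewrite -V.
- by exists f; rewrite -V.
Qed.

Lemma orth_opp (E : finType) (X Y : svec E) : orth X Y -> orth X (vopp Y).
Proof.
rewrite /vopp => -[H|[[e He] [f Hf]]].
- left => g; case: (H g) => ->; [left|right] => //.
- right; split.
  + exists f; case: Hf => -[-> ->]; [left|right] => //.
  + exists e; case: He => -[-> ->]; [left|right] => //.
Qed.

Lemma conf_or (E : finType) (W S S' : svec E) e :
  (forall f, f != e -> W f <> SZero -> W f = S f) -> S e = SNeg -> S' e = SPos ->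
  (forall f, f != e -> S' f = S f) -> conf W S \/ conf W S'.
Proof.
move=> H Se S'e HS; case We: (W e) => [||].
- left => f Wf; case: (eqVneq f e) => [fe|fe]; last exact: H.
  by subst f; rewrite We in Wf.
- right => f Wf; case: (eqVneq f e) => [fe|fe]; first by subst f; rewrite We S'e.
  by rewrite HS // H.
- left => f Wf; case: (eqVneq f e) => [fe|fe]; first by subst f; rewrite We Se.
  exact: H.
Qed.

Lemma orth_core (E : finType) (C : svec E -> Prop) (X Y S S' : svec E) e :
  (forall X, C X -> C (vopp X)) -> topeK C setT S -> topeK C setT S' ->
  (forall f, f != e -> Y f = S f) -> (forall f, S f <> SZero) ->
  S e = SNeg -> S' e = SPos -> (forall f, f != e -> S' f = S f) ->
  C X -> orth X Y.
Proof.
move=> C1 HT HT' HY Sf Se S'e HS CX; right; split.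
- apply: NNPP => Hn.
  have Hw : forall f, f != e -> vopp X f <> SZero -> vopp X f = S f.
    move=> f fe; have := Sf f; rewrite -(HY f fe) => Yf.
    rewrite /vopp.
    case Xf: (X f) => [||] //= _; case YfE: (Y f) Yf => [||] //= _;
      exfalso; apply: Hn; exists f; rewrite Xf YfE; by [left|right].
  case: (conf_or Hw Se S'e HS) => Hc.
  + exact: (HT _ (C1 _ CX) (fun f _ => in_setT f) Hc).
  + exact: (HT' _ (C1 _ CX) (fun f _ => in_setT f) Hc).
- apply: NNPP => Hn.
  have Hw : forall f, f != e -> X f <> SZero -> X f = S f.
    move=> f fe.
    have := Sf f; rewrite -(HY f fe) => Yf.
    case Xf: (X f) => [||] //= _; case YfE: (Y f) Yf => [||] //= _;
      exfalso; apply: Hn; exists f; rewrite Xf YfE; by [left|right].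
  case: (conf_or Hw Se S'e HS) => Hc.
  + exact: (HT _ CX (fun f _ => in_setT f) Hc).
  + exact: (HT' _ CX (fun f _ => in_setT f) Hc).
Qed.

Theorem lemmal (E : finType) (C : svec E -> Prop) :
  is_OM_circuits C -> OM_simple C -> OM_acyclic C ->
  exists lt : rel E, strict_total_order lt /\ strong_map C (Mlt_cocircuit lt).
Proof.
move=> HC Hs Ha.
have HC1 := HC; case: HC1 => _ C1 _ _.
have HT0 : topeK C setT (SI set0 [::]).
  move=> X CX _ Xc; have [h Xh] := Ha _ (C1 _ CX).
  have : X h <> SZero by move: Xh; rewrite /vopp; case: (X h).
  move/Xc; rewrite /SI inE /=; move: Xh; rewrite /vopp; by case: (X h).
have [s [us ms ts]] := seqB HC Hs Ha (erefl _) HT0.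
have ins : forall x, x \in s by move=> x; rewrite ms inE.
exists (fun x y => index x s < index y s); split.
  split => [x|x y z|x y xy]; first by rewrite ltnn.
  - exact: ltn_trans.
  - case: ltngtP => // H; exfalso; move/eqP: xy; apply.
    exact: (index_inj x (ins x) (ins y) H).
move=> Y [e He] X CX.
set S := SI set0 (take (index e s) s).
set S' := SI set0 (take (index e s).+1 s).
have HS : forall f, f != e -> S f = if index f s < index e s then SPos else SNeg.
  by move=> f _; rewrite /S /SI inE /= in_take.
have HS' : forall f, f != e -> S' f = S f.
  move=> f fe; rewrite HS // /S' /SI inE /= in_take // ltnS leq_eqVlt.
  suff -> : (index f s == index e s) = false by [].
  apply/negbTE; apply: contra fe => /eqP H; apply/eqP; exact: (index_inj e (ins _) (ins _) H).
have Sf : forall f, S f <> SZero by move=> f; rewrite /S /SI; case: (_ || _).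
have Se : S e = SNeg by rewrite /S /SI inE /= in_take // ltnn.
have S'e : S' e = SPos by rewrite /S' /SI inE /= in_take // ltnSn.
have YS : forall f, f != e ->
    (fun f => if index f s < index e s then SPos
              else if index e s < index f s then SNeg else SZero) f = S f.
  move=> f fe /=; rewrite HS //; case: ltngtP => // H; exfalso; move/eqP: fe; apply.
  exact: (index_inj e (ins _) (ins _) H).
have O1 : orth X (fun f => if index f s < index e s then SPos
              else if index e s < index f s then SNeg else SZero).
  exact: (orth_core C1 (ts _) (ts _) YS Sf Se S'e HS' CX).
case: He => V.
- by apply: orth_ext O1 => f; rewrite V.
- apply: orth_ext (orth_opp O1) => f; rewrite V /vopp.
  by case: ltngtP.
Qed.
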